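(* Let $0\le c\le1$. For every $n\in\mathbb{N}$, $\mathcal{L}(\{x\in\mathbb{I}\colon y_n(x)\le c\})=c$.
   Context: $\mathcal{L}$ is Lebesgue measure, $\mathbb{I}=(0,1)\setminus\mathbb{Q}$. Define $T\colon[0,1)\to[0,1)$ by: for $k\in\mathbb{N}$, $Tx=\lceil 1/x\rceil x-1$ if $x\in(\frac{1}{2k},\frac{1}{2k-1})$; $Tx=1-\lfloor 1/x\rfloor x$ if $x\in(\frac{1}{2k+1},\frac{1}{2k})$; $Tx=0$ if $x\in\{0\}\cup\{1/n\colon n\ge 2\}$. For $x\in(0,1)$ define $d_1(x)=\lceil 1/x\rceil$, $s_1(x)=1$ if $x\in[\frac{1}{2k},\frac{1}{2k-1})$ for some $k$, and $d_1(x)=\lfloor 1/x\rfloor$, $s_1(x)=-1$ if $x\in[\frac{1}{2k+1},\frac{1}{2k})$ for some $k$; $d_{n+1}(x)=d_1(T^nx)$, $s_{n+1}(x)=s_1(T^nx)$, $\epsilon_1(x)=1$, $\epsilon_{n+1}(x)=\prod_{k=1}^ns_k(x)$. For $x\in\mathbb{I}$ define $y_1(x)=x$ and, for $n\ge2$, $y_n(x)=(d_{n-1}(x)-1)T^{n-1}x$ if $\epsilon_n(x)=\epsilon_{n-1}(x)$, and $y_n(x)=(d_{n-1}(x)+1)T^{n-1}x$ if $\epsilon_n(x)=-\epsilon_{n-1}(x)$. *)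

(* Defs.v *)
From HB Require Import structures.
From mathcomp Require Import all_boot all_order all_algebra.
From mathcomp Require Import all_classical all_reals all_analysis.
Set Implicit Arguments. Unset Strict Implicit. Unset Printing Implicit Defensive.
Import Order.TTheory GRing.Theory Num.Theory.
Local Open Scope ring_scope.
Local Open Scope classical_set_scope.

Section Defs.
Variable R : realType.
Implicit Types x : R.

Definition inA x : bool :=
  `[< exists k : nat, (0 < k)%N /\ 1 / (2 * k%:R) < x < 1 / (2 * k%:R - 1) >].
Definition inB x : bool :=
  `[< exists k : nat, (0 < k)%N /\ 1 / (2 * k%:R + 1) < x < 1 / (2 * k%:R) >].
Definition inAc x : bool :=
  `[< exists k : nat, (0 < k)%N /\ 1 / (2 * k%:R) <= x < 1 / (2 * k%:R - 1) >].
Definition inBc x : bool :=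
  `[< exists k : nat, (0 < k)%N /\ 1 / (2 * k%:R + 1) <= x < 1 / (2 * k%:R) >].

(* The map T on [0,1) (values outside [0,1) are irrelevant junk: 0). *)
Definition Tmap x : R :=
  if inA x then (Num.ceil (1 / x))%:~R * x - 1
  else if inB x then 1 - (Num.floor (1 / x))%:~R * x
  else 0.

(* d_1 and s_1 on (0,1) (junk 0 elsewhere) *)
Definition d1 x : R :=
  if inAc x then (Num.ceil (1 / x))%:~R
  else if inBc x then (Num.floor (1 / x))%:~R
  else 0.
Definition s1 x : R :=
  if inAc x then 1 else if inBc x then -1 else 0.

Definition dn (n : nat) x : R := d1 (iter n.-1 Tmap x).
Definition sn (n : nat) x : R := s1 (iter n.-1 Tmap x).
Definition epsn (n : nat) x : R := \prod_(1 <= k < n) sn k x.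

Definition yn (n : nat) x : R :=
  if (n <= 1)%N then x
  else if epsn n x == epsn n.-1 x
       then (dn n.-1 x - 1) * iter n.-1 Tmap x
       else (dn n.-1 x + 1) * iter n.-1 Tmap x.

Definition irr01 : set R :=
  [set x | 0 < x < 1 /\ ~ (exists q : rat, x = ratr q)].

End Defs.

(* Main.v *)
Require Import Defs.
From HB Require Import structures.
From mathcomp Require Import all_boot all_order all_algebra.
From mathcomp Require Import all_classical all_reals all_analysis.
From mathcomp Require Import measurable_realfun.
From mathcomp Require Import ring lra zify.
Import Order.TTheory GRing.Theory Num.Theory.
Import numFieldNormedType.Exports.
Local Open Scope ring_scope.
Local Open Scope classical_set_scope.
Section Work.
Context (R : realType).
Local Notation I := (@irr01 R).

Definition isr (x : R) := exists q : rat, x = ratr q.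
Lemma isr_nat n : isr n%:R.
Proof. by exists n%:R; rewrite ratr_nat. Qed.
Lemma isrD x y : isr x -> isr y -> isr (x + y).
Proof. by move=> [p ->] [q ->]; exists (p + q); rewrite rmorphD. Qed.
Lemma isrN x : isr x -> isr (- x).
Proof. by move=> [p ->]; exists (- p); rewrite rmorphN. Qed.
Lemma isrM x y : isr x -> isr y -> isr (x * y).
Proof. by move=> [p ->] [q ->]; exists (p * q); rewrite rmorphM. Qed.
Lemma isrV x : isr x -> isr (x^-1).
Proof. by move=> [p ->]; exists (p^-1); rewrite fmorphV. Qed.
Lemma isr_aff_inv {a b u : R} : a != 0 -> isr a -> isr b -> isr (a * u + b) -> isr u.
Proof.
move=> a0 ra rb h.
have -> : u = (a * u + b + - b) * a^-1 by field.
by apply: isrM; [apply: isrD => //; apply: isrN|apply: isrV].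
Qed.

Definition P (i : nat) : set R := [set u | (i.+1%:R)^-1 < u < (i%:R)^-1].

Lemma invn_pos (i : nat) : (0 < i)%N -> 0 < (i%:R : R)^-1.
Proof. by move=> i0; rewrite invr_gt0 ltr0n. Qed.

Lemma piece_idx i n u : (0 < i)%N -> (0 < n)%N -> P i u ->
  (n.+1%:R)^-1 <= u -> u < (n%:R)^-1 -> n = i.
Proof.
move=> i0 n0 /andP[h1 h2] h3 h4.
have e1 : (n.+1%:R : R)^-1 < (i%:R)^-1 by apply: le_lt_trans h3 h2.
have e2 : (i.+1%:R : R)^-1 < (n%:R)^-1 by apply: lt_trans h1 h4.
rewrite ltf_pV2 ?posrE ?ltr0n // ltr_nat in e1.
rewrite ltf_pV2 ?posrE ?ltr0n // ltr_nat in e2.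
lia.
Qed.

Lemma piece_of {x : R} : I x -> exists2 i, (0 < i)%N & P i x.
Proof.
move=> [/andP[x0 x1] xr].
have y0 : 0 <= x^-1 by rewrite invr_ge0 ltW.
have xy : x * x^-1 = 1 by rewrite mulfV // gt_eqF.
have /andP[t1 t2] := truncn_itv y0.
set i := Num.trunc x^-1 in t1 t2.
have y1 : 1 < x^-1 by rewrite invf_gt1.
have i0 : (0 < i)%N.
  have : (1 : R) < i.+1%:R by apply: lt_trans t2.
  by rewrite ltr1n ltnS lt0n.
have ne : i%:R != x^-1.
  apply/negP => /eqP e; apply: xr.
  have -> : x = (i%:R)^-1 by rewrite e invrK.
  by apply: isrV; apply: isr_nat.
have t1' : (i%:R : R) < x^-1 by rewrite lt_neqAle ne t1.
exists i => //; apply/andP; split.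
  by rewrite -(invrK x) ltf_pV2 // posrE ?ltr0n ?invr_gt0.
by rewrite -(invrK x) ltf_pV2 // posrE ?ltr0n // invr_gt0.
Qed.


Lemma nat2k (k : nat) : (0 < k)%N ->
  (2 * k%:R : R) = ((k.*2).-1).+1%:R /\ (2 * k%:R - 1 : R) = ((k.*2).-1)%:R.
Proof.
move=> k0; have e : ((k.*2).-1).+1 = k.*2 by rewrite prednK // double_gt0.
split; first by rewrite e -muln2 natrM mulrC.
by apply/eqP; rewrite subr_eq natr1 e -muln2 natrM mulrC.
Qed.

Lemma nat2k1 (k : nat) : (2 * k%:R + 1 : R) = (k.*2).+1%:R /\ (2 * k%:R : R) = (k.*2)%:R.
Proof.
have h : (k.*2)%:R = 2 * k%:R :> R by rewrite -muln2 natrM mulrC.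
by split; rewrite ?h // -[(k.*2).+1%:R]natr1 h.
Qed.

Lemma inAc_P {i : nat} {u : R} : (0 < i)%N -> P i u -> inAc u = odd i.
Proof.
move=> i0 Pu; case oi: (odd i).
  apply/asboolP; exists (i.+1)./2; split.
    by rewrite half_gt0 ltnS.
  have hk : ((i.+1)./2).*2 = i.+1 by rewrite even_halfK //= oi.
  have k0 : (0 < (i.+1)./2)%N by rewrite half_gt0 ltnS.
  have [e1 e2] := nat2k _ k0.
  rewrite !div1r e2 e1 hk /=; case/andP: Pu => h1 h2.
  by rewrite (ltW h1) h2.
apply/negbTE/asboolP => -[k [k0 /andP[h1 h2]]].
have [e1 e2] := nat2k _ k0.
rewrite !div1r e2 e1 in h1 h2.
have p : (0 < (k.*2).-1)%N.
  by move: k0; case: k {e1 e2 h1 h2} => // k _; rewrite doubleS /=.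
have e := piece_idx _ _ _ i0 p Pu h1 h2.
move: oi; rewrite -e.
by case: k k0 {e1 e2 h1 h2 p e} => // k _; rewrite doubleS /= odd_double.
Qed.

Lemma inA_P {i : nat} {u : R} : (0 < i)%N -> P i u -> inA u = odd i.
Proof.
move=> i0 Pu; case oi: (odd i).
  apply/asboolP; exists (i.+1)./2; split.
    by rewrite half_gt0 ltnS.
  have hk : ((i.+1)./2).*2 = i.+1 by rewrite even_halfK //= oi.
  have k0 : (0 < (i.+1)./2)%N by rewrite half_gt0 ltnS.
  have [e1 e2] := nat2k _ k0.
  by rewrite !div1r e2 e1 hk /=; case/andP: Pu => h1 h2; rewrite h1 h2.
apply/negbTE/asboolP => -[k [k0 /andP[h1 h2]]].
have [e1 e2] := nat2k _ k0.
rewrite !div1r e2 e1 in h1 h2.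
have p : (0 < (k.*2).-1)%N.
  by move: k0; case: k {e1 e2 h1 h2} => // k _; rewrite doubleS /=.
have e := piece_idx _ _ _ i0 p Pu (ltW h1) h2.
move: oi; rewrite -e.
by case: k k0 {e1 e2 h1 h2 p e} => // k _; rewrite doubleS /= odd_double.
Qed.

Lemma inBc_P {i : nat} {u : R} : (0 < i)%N -> P i u -> inBc u = ~~ odd i.
Proof.
move=> i0 Pu; case oi: (odd i) => /=.
  apply/negbTE/asboolP => -[k [k0 /andP[h1 h2]]].
  have [e1 e2] := nat2k1 k.
  rewrite !div1r e1 e2 in h1 h2.
  have p : (0 < k.*2)%N by rewrite double_gt0.
  have e := piece_idx _ _ _ i0 p Pu h1 h2.
  by move: oi; rewrite -e odd_double.
apply/asboolP; exists i./2; split.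
  by rewrite half_gt0; move: i0 oi; clear Pu; case: i => // -[].
have hk : (i./2).*2 = i by rewrite even_halfK // oi.
have [e1 e2] := nat2k1 i./2.
by rewrite !div1r e1 e2 hk /=; case/andP: Pu => h1 h2; rewrite (ltW h1) h2.
Qed.

Lemma inB_P {i : nat} {u : R} : (0 < i)%N -> P i u -> inB u = ~~ odd i.
Proof.
move=> i0 Pu; case oi: (odd i) => /=.
  apply/negbTE/asboolP => -[k [k0 /andP[h1 h2]]].
  have [e1 e2] := nat2k1 k.
  rewrite !div1r e1 e2 in h1 h2.
  have p : (0 < k.*2)%N by rewrite double_gt0.
  have e := piece_idx _ _ _ i0 p Pu (ltW h1) h2.
  by move: oi; rewrite -e odd_double.
apply/asboolP; exists i./2; split.
  by rewrite half_gt0; move: i0 oi; clear Pu; case: i => // -[].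
have hk : (i./2).*2 = i by rewrite even_halfK // oi.
have [e1 e2] := nat2k1 i./2.
by rewrite !div1r e1 e2 hk /=; case/andP: Pu => h1 h2; rewrite h1 h2.
Qed.


Lemma P_facts {i : nat} {u : R} : (0 < i)%N -> P i u ->
  [/\ 0 < u, (i%:R : R) < u^-1 & u^-1 < i.+1%:R].
Proof.
move=> i0 /andP[h1 h2].
have r0 : (0 : R) < i%:R by rewrite ltr0n.
have u0 : 0 < u by apply: lt_trans h1; rewrite invr_gt0 ltr0n.
split => //.
  by rewrite invf_pgt // posrE.
by rewrite invf_plt // posrE ?ltr0n.
Qed.

Lemma ceil_P {i : nat} {u : R} : (0 < i)%N -> P i u -> Num.ceil (1 / u) = (i.+1)%:Z.
Proof.
move=> i0 Pu; have [u0 h1 h2] := P_facts i0 Pu.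
apply: ceil_def; rewrite div1r.
have -> : ((i.+1)%:Z - 1 = i%:Z)%R by lia.
by rewrite -!pmulrn h1 (ltW h2).
Qed.

Lemma floor_P {i : nat} {u : R} : (0 < i)%N -> P i u -> Num.floor (1 / u) = i%:Z.
Proof.
move=> i0 Pu; have [u0 h1 h2] := P_facts i0 Pu.
apply: floor_def; rewrite div1r.
have -> : (i%:Z + 1 = (i.+1)%:Z)%R by lia.
by rewrite -!pmulrn (ltW h1) h2.
Qed.

Lemma Tmap_P {i : nat} {u : R} : (0 < i)%N -> P i u ->
  Tmap u = if odd i then i.+1%:R * u - 1 else 1 - i%:R * u.
Proof.
move=> i0 Pu; rewrite /Tmap (inA_P i0 Pu) (inB_P i0 Pu).
case: (odd i) => /=.
  by rewrite (ceil_P i0 Pu) -pmulrn.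
by rewrite (floor_P i0 Pu) -pmulrn.
Qed.

Lemma d1_P {i : nat} {u : R} : (0 < i)%N -> P i u ->
  d1 u = if odd i then i.+1%:R else i%:R.
Proof.
move=> i0 Pu; rewrite /d1 (inAc_P i0 Pu) (inBc_P i0 Pu).
case: (odd i) => /=.
  by rewrite (ceil_P i0 Pu) -pmulrn.
by rewrite (floor_P i0 Pu) -pmulrn.
Qed.

Lemma s1_P {i : nat} {u : R} : (0 < i)%N -> P i u -> s1 u = if odd i then 1 else -1.
Proof.
move=> i0 Pu; rewrite /s1 (inAc_P i0 Pu) (inBc_P i0 Pu).
by case: (odd i).
Qed.

Lemma y2_eq (u : R) : yn 2 u = if s1 u == 1 then (d1 u - 1) * Tmap u
  else (d1 u + 1) * Tmap u.
Proof.
by rewrite /yn /= /epsn big_nat1 big_geq.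
Qed.

Lemma y2_P {i : nat} {u : R} : (0 < i)%N -> P i u ->
  yn 2 u = if odd i then i%:R * (i.+1%:R * u - 1)
           else i.+1%:R * (1 - i%:R * u).
Proof.
move=> i0 Pu; rewrite y2_eq (s1_P i0 Pu) (d1_P i0 Pu) (Tmap_P i0 Pu).
case: (odd i); rewrite ?eqxx //.
  by rewrite -natr1 addrK.
have -> : (-1 == 1 :> R) = false.
  by apply/negbTE; rewrite neq_lt; apply/orP; left; lra.
by rewrite natr1.
Qed.


Definition ca (k : nat) : R := if odd k then k.+1%:R else - k%:R.
Definition cb (k : nat) : R := if odd k then -1 else 1.
Definition cm (k : nat) : nat := if odd k then k else k.+1.

Lemma cm_gt0 k : (0 < k)%N -> (0 < cm k)%N.
Proof. by rewrite /cm; case: (odd k). Qed.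

Lemma ca_neq0 k : (0 < k)%N -> ca k != 0.
Proof.
by move=> k0; rewrite /ca; case: (odd k); rewrite ?oppr_eq0 pnatr_eq0 // -lt0n.
Qed.

Lemma isr_ca k : isr (ca k).
Proof. by rewrite /ca; case: (odd k); [apply: isr_nat | apply/isrN/isr_nat]. Qed.
Lemma isr_cb k : isr (cb k).
Proof. by rewrite /cb; case: (odd k); [apply/isrN|]; exact: (isr_nat 1). Qed.

Lemma Tmap_aff {k : nat} {u : R} : (0 < k)%N -> P k u -> Tmap u = ca k * u + cb k.
Proof.
move=> k0 Pu; rewrite (Tmap_P k0 Pu) /ca /cb; case: (odd k) => //.
by rewrite mulNr addrC.
Qed.

Lemma y2_aff {k : nat} {u : R} : (0 < k)%N -> P k u ->
  yn 2 u = (cm k)%:R * (ca k * u + cb k).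
Proof.
move=> k0 Pu; rewrite (y2_P k0 Pu) /ca /cb /cm; case: (odd k) => //.
by rewrite mulNr addrC.
Qed.

Lemma aff_P k u : (0 < k)%N ->
  P k u <-> 0 < ca k * u + cb k < ((cm k)%:R)^-1.
Proof.
move=> k0; rewrite /P /ca /cb /cm /=.
have r0 : (0 : R) < k%:R by rewrite ltr0n.
have ri := mulfV (lt0r_neq0 r0).
have s0 : (0 : R) < k.+1%:R by rewrite ltr0n.
have si := mulfV (lt0r_neq0 s0).
have ri0 : (0 : R) < (k%:R)^-1 by rewrite invr_gt0.
have si0 : (0 : R) < (k.+1%:R)^-1 by rewrite invr_gt0.
have e : (k.+1%:R : R) = k%:R + 1 by rewrite -natr1.
rewrite e in s0 si si0 *.
case: (odd k); rewrite ?e; split => /andP[h1 h2]; apply/andP; split; nra.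
Qed.

Lemma Tmap_I x : I x -> I (Tmap x).
Proof.
move=> Ix; have [k k0 Pk] := piece_of Ix.
have /(aff_P k x k0) /andP[h1 h2] := Pk.
rewrite (Tmap_aff k0 Pk); split.
  apply/andP; split => //; rewrite (lt_le_trans h2) //.
  by rewrite invf_le1 ?ler1n ?ltr0n ?cm_gt0.
move=> hr; apply: Ix.2.
by have := isr_aff_inv (ca_neq0 _ k0) (isr_ca k) (isr_cb k) hr.
Qed.

Lemma iter_I n x : I x -> I (iter n (@Tmap R) x).
Proof. by move=> Ix; elim: n => //= n IH; apply: Tmap_I. Qed.

Lemma s1_I z : I z -> s1 z != 0.
Proof.
move=> Iz; have [k k0 Pk] := piece_of Iz.
rewrite (s1_P k0 Pk); case: (odd k); rewrite ?oppr_eq0; exact: oner_neq0.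
Qed.

Lemma yn_iter n x : I x -> yn n.+2 x = yn 2 (iter n (@Tmap R) x).
Proof.
move=> Ix; rewrite y2_eq /yn /=.
have e0 : epsn n.+1 x != 0.
  rewrite /epsn; apply: (big_ind (fun v : R => v != 0)) => [|v w|k _] /=.
  - exact: oner_neq0.
  - exact: mulf_neq0.
  - by rewrite /sn; apply/s1_I/iter_I.
have -> : epsn n.+2 x = epsn n.+1 x * s1 (iter n (@Tmap R) x).
  by rewrite /epsn big_nat_recr.
rewrite -{2}[epsn n.+1 x]mulr1 (inj_eq (mulfI e0)).
by rewrite /dn /=.
Qed.


Local Notation lam := (@lebesgue_measure R).

Lemma aff_mfun (a b : R) : measurable_fun [set: R] (fun x : R => a * x + b).
Proof.
apply: continuous_measurable_fun => x.
apply: continuousD; last exact: cvg_cst.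
apply: continuousM; [exact: cvg_cst | exact: cvg_id].
Qed.

Definition aff (a b : R) := fun x : R => a * x + b.

Lemma aff_measure (a b : R) (A : set R) : a != 0 -> measurable A ->
  lam A = ((`|a|)%R%:E * lam (aff a b @^-1` A))%E.
Proof.
move=> a0 mA.
pose pm := measure_function_pushforward__canonical__measure_function_Measure (@lebesgue_measure R) (f:=aff a b : measurableTypeR R -> measurableTypeR R) (aff_mfun a b).
have := @lebesgue_measure_unique R (measure_function_mscale__canonical__measure_function_Measure (NngNum (normr_ge0 a)) pm).
rewrite /= => ->//.
move=> _ [[x y] _ <-].
rewrite /= /mscale /pushforward /=.
rewrite /pushforward.
have [ap|an] := boolP (0 < a).
  have -> : aff a b @^-1` `]x, y] = `](x - b) / a, (y - b) / a].
    apply/seteqP; split => z; rewrite /aff /= !in_itv /=.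
      move=> /andP[h1 h2]; apply/andP; split.
        by rewrite ltr_pdivrMr // mulrC; lra.
      by rewrite ler_pdivlMr // mulrC; lra.
    move=> /andP[h1 h2]; apply/andP; split.
      by move: h1; rewrite ltr_pdivrMr // mulrC; lra.
    by move: h2; rewrite ler_pdivlMr // mulrC; lra.
  rewrite !lebesgue_measure_itv /= !lte_fin ltr_pM2r ?invr_gt0 //.
  rewrite ltrD2r; case: ifP => [xy|_]; last by rewrite mule0.
  rewrite -!EFinD -EFinM gtr0_norm //; congr (_%:E); field; lra.
have a0' : a < 0 by rewrite lt_neqAle a0 andTb leNgt.
have -> : aff a b @^-1` `]x, y] = `[(y - b) / a, (x - b) / a[.
  apply/seteqP; split => z; rewrite /aff /= !in_itv /=.
    move=> /andP[h1 h2]; apply/andP; split.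
      by rewrite ler_ndivrMr // mulrC; lra.
    by rewrite ltr_ndivlMr // mulrC; lra.
  move=> /andP[h1 h2]; apply/andP; split.
    by move: h2; rewrite ltr_ndivlMr // mulrC; lra.
  by move: h1; rewrite ler_ndivrMr // mulrC; lra.
rewrite !lebesgue_measure_itv /= !lte_fin ltr_nM2r ?invr_lt0 //.
rewrite ltrD2r; case: ifP => [xy|_]; last by rewrite mule0.
rewrite -!EFinD -EFinM ltr0_norm //; congr (_%:E); field; lra.
Qed.

Lemma aff_measureV (a b : R) (A : set R) : a != 0 -> measurable A ->
  lam (aff a b @^-1` A) = (((`|a|)^-1)%R%:E * lam A)%E.
Proof.
move=> a0 mA; rewrite (aff_measure a b A a0 mA) muleA -EFinM mulVf ?mul1e //.
by rewrite normr_eq0.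
Qed.

Lemma aff_meas (a b : R) (A : set R) : measurable A -> measurable (aff a b @^-1` A).
Proof. by move=> mA; rewrite -[X in measurable X]setTI; apply: aff_mfun. Qed.

Lemma mQ : measurable (range (@ratr R)).
Proof.
have -> : range (@ratr R) = \bigcup_(q : rat) [set ratr q].
  by apply/seteqP; split => [_ [q _ <-]|_ [q _ ->]]; exists q.
by apply: bigcupT_measurable_rat => q; exact: measurable_set1.
Qed.

Lemma I_eq : I = `]0, 1[ `\` range (@ratr R).
Proof.
apply/seteqP; split => x.
  move=> [h nq]; split; first by rewrite /= in_itv.
  by move=> [q _ e]; apply: nq; exists q.
move=> [h nq]; split; first by move: h; rewrite /= in_itv.
by move=> [q e]; apply: nq; exists q.
Qed.

Lemma mI : measurable I.
Proof. by rewrite I_eq; apply: measurableD; [exact: measurable_itv | exact: mQ]. Qed.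

Lemma lamI (A : set R) : measurable A -> A `<=` `]0, 1[ -> lam (A `&` I) = lam A.
Proof.
move=> mA A01.
have eA : A = (A `&` I) `|` (A `&` range ratr).
  apply/seteqP; split => [x Ax|x [[]|[]]] //.
  have [[q e]|nq] := pselect (exists q, x = ratr q).
    by right; split => //; exists q.
  left; split => //; split => //.
  by have := A01 x Ax; rewrite /= in_itv.
have h0 : lam (A `&` range ratr) = 0%E.
  apply/le_anti/andP; split; last exact: measure_ge0.
  rewrite -(lebesgue_measure_rat R); apply: le_measure; rewrite ?inE.
  - by apply: measurableI => //; exact: mQ.
  - exact: mQ.
  - by move=> x [].
transitivity (lam (A `&` I) + lam (A `&` range ratr))%E; first by rewrite h0 adde0.
rewrite [in RHS]eA measureU //.
- exact: measurableI mA mI.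
- by apply: measurableI => //; exact: mQ.
- apply/seteqP; split => // x [[_ [_ nq]] [_ [q _ e]]]; apply: nq.
  by exists q.
Qed.

Lemma P_itv k : P k = `](k.+1%:R)^-1, (k%:R)^-1[.
Proof. by apply/seteqP; split => x; rewrite /P /= in_itv. Qed.

Lemma mP k : measurable (P k).
Proof. by rewrite P_itv; exact: measurable_itv. Qed.

Lemma invS_lt k : (0 < k)%N -> ((k.+1%:R)^-1 : R) < (k%:R)^-1.
Proof. by move=> k0; rewrite ltf_pV2 ?posrE ?ltr0n // ltr_nat. Qed.

Lemma lamP k : (0 < k)%N -> lam (P k) = ((k%:R)^-1 - (k.+1%:R)^-1)%:E.
Proof.
by move=> k0; rewrite P_itv lebesgue_measure_itv /= lte_fin invS_lt // EFinB.
Qed.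

Lemma P_sub01 k : (0 < k)%N -> P k `<=` `]0, 1[.
Proof.
move=> k0 u Pu; have [u0 _ _] := P_facts k0 Pu.
case/andP: Pu => _ h; rewrite /= in_itv /= u0 (lt_le_trans h) //.
by rewrite invf_le1 ?ler1n ?ltr0n.
Qed.


Definition J (j : nat) : set R := `]0, (j%:R)^-1[.

Lemma decomp S j : S `<=` I -> (0 < j)%N ->
  S `&` J j = \bigcup_(k in [set k | (j <= k)%N]) (S `&` P k).
Proof.
move=> SI j0; apply/seteqP; split => x.
  move=> [Sx]; rewrite /J /= in_itv /= => /andP[x0 xj].
  have [k k0 Pk] := piece_of (SI x Sx).
  exists k; last by split.
  rewrite /=; case/andP: (Pk) => h1 _.
  have : (k.+1%:R : R)^-1 < (j%:R)^-1 by apply: lt_trans xj.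
  by rewrite ltf_pV2 ?posrE ?ltr0n // ltr_nat ltnS.
move=> [k /= jk [Sx Pk]]; split => //.
have k0 : (0 < k)%N by apply: leq_trans jk.
have [x0 _ _] := P_facts k0 Pk.
rewrite /J /= in_itv /= x0 /=; case/andP: Pk => _ h.
by rewrite (lt_le_trans h) // lef_pV2 ?posrE ?ltr0n // ler_nat.
Qed.

Lemma triv_pieces S (D : set nat) : (forall k, D k -> (0 < k)%N) ->
  trivIset D (fun k => S `&` P k).
Proof.
move=> D0; apply/trivIsetP => k k' Dk Dk' kk'.
apply/seteqP; split => // x [[_ Pk] [_ Pk']].
case/andP: (Pk') => h1 h2.
have := piece_idx _ _ _ (D0 _ Dk) (D0 _ Dk') Pk (ltW h1) h2.
by move=> e; rewrite e eqxx in kk'.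
Qed.

Lemma sum_pieces S j : S `<=` I -> (0 < j)%N ->
  (forall k, (0 < k)%N -> measurable (S `&` P k)) ->
  lam (S `&` J j) = (\sum_(0 <= k <oo | k \in [set k | (j <= k)%N]) lam (S `&` P k))%E.
Proof.
move=> SI j0 mS; rewrite decomp // measure_bigcup //.
  by move=> k /= jk; apply: mS; apply: leq_trans jk.
by apply: triv_pieces => k /= jk; apply: leq_trans jk.
Qed.

Definition PU (c : R) (S : set R) := S `<=` I /\ forall k, (0 < k)%N ->
  measurable (S `&` P k) /\ lam (S `&` P k) = (c%:E * lam (P k))%E.

Definition Unif (c : R) (S : set R) := [/\ S `<=` I, measurable S &
  forall j, (0 < j)%N -> lam (S `&` J j) = (c / j%:R)%:E].

Lemma lamJ j : (0 < j)%N -> lam (J j) = ((j%:R)^-1)%:E.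
Proof.
move=> j0; rewrite /J lebesgue_measure_itv /= lte_fin invr_gt0 ltr0n j0.
by rewrite oppr0 adde0.
Qed.

Lemma J_sub01 j : (0 < j)%N -> J j `<=` `]0, 1[.
Proof.
move=> j0 x; rewrite /J /= !in_itv /= => /andP[-> h] /=.
by rewrite (lt_le_trans h) // invf_le1 ?ler1n ?ltr0n.
Qed.

Lemma PU_Unif c S : 0 <= c -> PU c S -> Unif c S.
Proof.
move=> c0 [SI hS].
have mS : measurable S.
  have -> : S = \bigcup_(k in [set k | (1 <= k)%N]) (S `&` P k).
    rewrite -decomp //; apply/esym/setIidl => x Sx.
    by have := SI x Sx; rewrite /J /= in_itv invr1 => -[].
  by apply: bigcup_measurable => k /= k0; case: (hS k k0).
split => // j j0.
rewrite sum_pieces //; last by move=> k k0; case: (hS k k0).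
rewrite (@eq_eseriesr _ _ (fun k => c%:E * lam (I `&` P k))%E); last first.
  move=> k /=; rewrite inE /= => jk.
  have k0 : (0 < k)%N by apply: leq_trans jk.
  have [_ ->] := hS k k0.
  by rewrite setIC lamI //; [exact: mP | exact: P_sub01].
rewrite nneseriesZl; last by move=> k _; exact: measure_ge0.
rewrite -sum_pieces //; last by move=> k _; apply: measurableI; [exact: mI | exact: mP].
rewrite setIC lamI //; last exact: J_sub01.
  by rewrite lamJ // -EFinM.
exact: measurable_itv.
Qed.


Lemma isr_aff {a b u : R} : isr a -> isr b -> isr u -> isr (a * u + b).
Proof. by move=> ha hb hu; apply: isrD => //; apply: isrM. Qed.

Lemma inv_id_nat (k : nat) : (0 < k)%N ->
  ((k%:R)^-1 - (k.+1%:R)^-1 : R) = (k%:R * k.+1%:R)^-1.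
Proof.
move=> k0; rewrite -[k.+1%:R]natr1.
have r0 : (k%:R : R) != 0 by rewrite pnatr_eq0 -lt0n.
have r1 : (k%:R + 1 : R) != 0 by rewrite natr1 pnatr_eq0.
by field; rewrite ?r0 ?r1 ?r1'.
Qed.

Lemma step c S : Unif c S -> PU c [set u | I u /\ S (Tmap u)].
Proof.
move=> [SI mS hS]; split; first by move=> u [].
move=> k k0.
have E : [set u | I u /\ S (Tmap u)] `&` P k =
    aff (ca k) (cb k) @^-1` (S `&` J (cm k)).
  apply/seteqP; split => u.
    move=> [[Iu Su] Pk]; rewrite /aff /= -(Tmap_aff k0 Pk); split => //.
    by have := (aff_P k u k0).1 Pk; rewrite -(Tmap_aff k0 Pk) /J /= in_itv.
  rewrite /aff /= => -[Su]; rewrite /J /= in_itv /= => h.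
  have Pk : P k u by apply/(aff_P k u k0).
  rewrite (Tmap_aff k0 Pk); split => //; split => //.
  split; first by have := P_sub01 k k0 u Pk; rewrite /= in_itv.
  move=> hr; apply: (SI _ Su).2.
  exact: (isr_aff (isr_ca k) (isr_cb k) hr).
have mE : measurable (S `&` J (cm k)) by apply: measurableI mS _; exact: measurable_itv.
rewrite E; split; first exact: aff_meas.
rewrite aff_measureV ?ca_neq0 // hS ?cm_gt0 // lamP // -EFinM inv_id_nat //.
congr (_%:E); rewrite /ca /cm.
have r0 : (k%:R : R) != 0 by rewrite pnatr_eq0 -lt0n.
have r1 : (k.+1%:R : R) != 0 by rewrite pnatr_eq0.
have r1' : (1 + k%:R : R) != 0 by rewrite addrC natr1 pnatr_eq0.
case: (odd k); rewrite ?normrN ger0_norm ?ler0n //.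
  by field; rewrite ?r0 ?r1 ?r1'.
by field; rewrite ?r0 ?r1 ?r1'.
Qed.


Lemma lamIc c : 0 <= c -> c <= 1 -> lam (I `&` `]-oo, c]) = c%:E.
Proof.
move=> c0 c1.
have e : I `&` `]-oo, c] = (`]-oo, c] `&` `]0, 1[) `&` I.
  apply/seteqP; split => x.
    move=> [Ix xc]; split => //; split => //.
    by case: Ix => h _; rewrite /= in_itv.
  by move=> [[xc _] Ix].
have mA : measurable (`]-oo, c] `&` `]0, 1[ : set R).
  by apply: measurableI; exact: measurable_itv.
have sub : `]-oo, c] `&` `]0, 1[ `<=` (`]0, 1[ : set R) by move=> x [].
rewrite e (lamI _ mA sub).
have [->|c1'] := eqVneq c 1.
  rewrite setIidr; last first.
    by move=> x; rewrite /= !in_itv /= => /andP[_ /ltW].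
  by rewrite lebesgue_measure_itv /= lte_fin ltr01 oppr0 adde0.
have clt : c < 1 by rewrite lt_neqAle c1' c1.
have -> : `]-oo, c] `&` `]0, 1[ = `]0, c] :> set R.
  apply/seteqP; split => x; rewrite /= !in_itv /=.
    by move=> [xc /andP[-> _]].
  move=> /andP[x0 xc]; split => //; rewrite x0 /=.
  exact: le_lt_trans xc clt.
rewrite lebesgue_measure_itv /= lte_fin.
have [c0'|] := boolP (0 < c).
  by rewrite oppr0 adde0.
by rewrite -leNgt => cle; have -> : c = 0 by apply/le_anti; rewrite cle c0.
Qed.

Lemma base c : 0 <= c -> c <= 1 -> PU c [set u | I u /\ yn 2 u <= c].
Proof.
move=> c0 c1; split; first by move=> u [].
move=> k k0.
have m0 : ((cm k)%:R : R) != 0 by rewrite pnatr_eq0 -lt0n cm_gt0.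
have mpos : (0 : R) < (cm k)%:R by rewrite ltr0n cm_gt0.
have mi := mulfV m0.
have mi0 : (0 : R) < ((cm k)%:R)^-1 by rewrite invr_gt0.
set a := (cm k)%:R * ca k; set b := (cm k)%:R * cb k.
have a0 : a != 0 by apply: mulf_neq0 => //; exact: ca_neq0.
have ra : isr a by apply: isrM; [exact: isr_nat | exact: isr_ca].
have rb : isr b by apply: isrM; [exact: isr_nat | exact: isr_cb].
have eaff u : aff a b u = (cm k)%:R * (ca k * u + cb k) by rewrite /aff /a /b; ring.
have E : [set u | I u /\ yn 2 u <= c] `&` P k = aff a b @^-1` (I `&` `]-oo, c]).
  apply/seteqP; split => u.
    move=> [[Iu yc] Pk]; rewrite /= in_itv /=.
    have ey : aff a b u = yn 2 u by rewrite eaff (y2_aff k0 Pk).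
    rewrite ey yc; split => //; split.
      rewrite (y2_aff k0 Pk).
      have /andP[h1 h2] := (aff_P k u k0).1 Pk.
      apply/andP; split; nra.
    move=> hr; apply: Iu.2; rewrite -ey in hr.
    exact: (isr_aff_inv a0 ra rb hr).
  rewrite /= in_itv /= => -[Ih yc].
  have Pk : P k u.
    apply/(aff_P k u k0); case: Ih => /andP[h1 h2] _.
    rewrite eaff in h1 h2; apply/andP; split; nra.
  have ey : aff a b u = yn 2 u by rewrite eaff (y2_aff k0 Pk).
  split => //; split; last by rewrite -ey.
  split; first by have := P_sub01 k k0 u Pk; rewrite /= in_itv.
  move=> hr; apply: Ih.2.
  exact: (isr_aff ra rb hr).
have mE : measurable (I `&` `]-oo, c] : set R).
  by apply: measurableI; [exact: mI | exact: measurable_itv].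
rewrite E; split; first exact: aff_meas.
rewrite aff_measureV // lamIc // lamP // -EFinM inv_id_nat //.
congr (_%:E); rewrite /a /ca /cm.
have r0 : (k%:R : R) != 0 by rewrite pnatr_eq0 -lt0n.
have r1 : (k.+1%:R : R) != 0 by rewrite pnatr_eq0.
have r1' : (1 + k%:R : R) != 0 by rewrite addrC natr1 pnatr_eq0.
case: (odd k); rewrite ?mulrN ?normrN ger0_norm ?mulr_ge0 ?ler0n //.
  by rewrite mulrC.
by rewrite mulrC [k.+1%:R * _]mulrC.
Qed.

Lemma iter_set c N : [set x | I x /\ yn 2 (iter N.+1 (@Tmap R) x) <= c] =
  [set u | I u /\ [set x | I x /\ yn 2 (iter N (@Tmap R) x) <= c] (Tmap u)].
Proof.
have e x : iter N.+1 (@Tmap R) x = iter N (@Tmap R) (Tmap x) by rewrite iterSr.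
apply/seteqP; split => u.
  by move=> [Iu h]; split => //; split; [exact: Tmap_I | rewrite -e].
by move=> [Iu [_ h]]; split => //; rewrite e.
Qed.

Lemma unif_all c N : 0 <= c -> c <= 1 ->
  Unif c [set x | I x /\ yn 2 (iter N (@Tmap R) x) <= c].
Proof.
move=> c0 c1; elim: N => [|N IH].
  by apply: PU_Unif => //; exact: base.
by rewrite iter_set; apply: PU_Unif => //; exact: step.
Qed.

End Work.

Theorem lemma3p4 (R : realType) (c : R) (hc0 : 0 <= c) (hc1 : c <= 1)
  (n : nat) (hn : (1 <= n)%N) :
  lebesgue_measure [set x : R | irr01 x /\ yn n x <= c] = (c%:E)%E.
Proof.
case: n hn => // -[_|n _].
  have -> : [set x : R | irr01 x /\ yn 1 x <= c] = (@irr01 R) `&` `]-oo, c].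
    by apply/seteqP; split => x; rewrite /= in_itv /= /yn /=.
  exact: lamIc.
have -> : [set x : R | irr01 x /\ yn n.+2 x <= c] =
    [set x | irr01 x /\ yn 2 (iter n (@Tmap R) x) <= c].
  apply/seteqP; split => x /= [Ix h]; split => //.
    by rewrite -(@yn_iter R n x Ix).
  by rewrite (@yn_iter R n x Ix).
have [SI _ hS] := @unif_all R c n hc0 hc1.
have := hS 1%N isT; rewrite divr1 setIidl // => x Sx.
by have := SI x Sx; rewrite /J /= in_itv invr1 => -[].
Qed.
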